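(* Let $w=\mu^{\omega}(a)$ where $\mu$ is an injective $r$-uniform morphism ($r\ge2$) on a finite alphabet, prolongable on the letter $a$. If $w$ is periodic, then no letter appears twice in the minimal repeating unit of $w$ (the shortest word $t$ with $w=t^{\omega}$).
   Context: A morphism $\mu$ satisfies $\mu(uv)=\mu(u)\mu(v)$ for finite $u$; it is $r$-uniform if $|\mu(b)|=r$ for all letters $b$; prolongable on $a$ means $\mu(a)$ begins with $a$, and $\mu^{\omega}(a)$ is the infinite word having every $\mu^n(a)$ as a prefix. *)

(* Defs.v *)
From mathcomp Require Import all_boot.
Set Implicit Arguments. Unset Strict Implicit. Unset Printing Implicit Defensive.

Definition morph_word (A : Type) (mu : A -> seq A) (u : seq A) : seq A :=
  flatten (map mu u).

Definition morph_iter (A : Type) (mu : A -> seq A) (n : nat) (u : seq A) : seq A :=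
  iter n (morph_word mu) u.

Definition uniform (A : Type) (mu : A -> seq A) (r : nat) : Prop :=
  forall b, size (mu b) = r.

Definition prolongable (A : Type) (mu : A -> seq A) (a : A) : Prop :=
  exists u, mu a = a :: u.

(* w is mu^omega(a): every mu^n(a) is a prefix of w *)
Definition is_fixed_point_from (A : Type) (mu : A -> seq A) (a : A) (w : nat -> A) : Prop :=
  forall n i, i < size (morph_iter mu n [:: a]) -> w i = nth a (morph_iter mu n [:: a]) i.

Definition has_period (A : Type) (w : nat -> A) (p : nat) : Prop :=
  0 < p /\ forall i, w (i + p) = w i.

Definition periodic (A : Type) (w : nat -> A) : Prop := exists p, has_period w p.

(* Main.v *)
Require Import Defs.
From mathcomp Require Import all_boot.
From mathcomp Require Import zify.

Lemma nth_flatten_unif (A:Type) (mu: A -> seq A) r a (u: seq A) i k :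
  (forall b, size (mu b) = r) -> i < size u -> k < r ->
  nth a (flatten (map mu u)) (r*i + k) = nth a (mu (nth a u i)) k.
Proof.
move=> Hs; elim: u i => [|x u IH] [|i] //= Hi Hk.
- by rewrite muln0 add0n nth_cat Hs Hk.
- rewrite nth_cat Hs ifN; last by rewrite -leqNgt mulnS -addnA leq_addr.
  by rewrite mulnS -addnA addKn IH.
Qed.

Lemma size_mw (A:Type) (mu: A -> seq A) r (u : seq A) :
  (forall b, size (mu b) = r) -> size (flatten (map mu u)) = r * size u.
Proof. move=> Hs; elim: u => [|x u IH] /=; first by rewrite muln0.
by rewrite size_cat Hs IH mulnS. Qed.

Lemma fix_eq (A : Type) (mu : A -> seq A) (r : nat) (a : A) (w : nat -> A) :
  2 <= r -> uniform mu r -> is_fixed_point_from mu a w ->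
  forall i k, k < r -> w (r*i+k) = nth a (mu (w i)) k.
Proof.
move=> Hr Hu Hfix i k Hk.
have Hsz m : size (morph_iter mu m [::a]) = r ^ m.
  elim: m => [|m IH]; first by []. rewrite /morph_iter iterS -/(morph_iter mu m [::a]).
  by rewrite /morph_word (@size_mw _ _ _ _ Hu) IH expnS.
have Hi : i < r ^ i by apply: ltn_expl.
rewrite (Hfix i i) ?Hsz // (Hfix i.+1 (r*i+k)).
  by rewrite /morph_iter iterS -/(morph_iter mu i [::a]) /morph_word nth_flatten_unif ?Hsz.
rewrite Hsz expnS.
have : r * i.+1 <= r * r ^ i by rewrite leq_mul2l Hi orbT.
rewrite mulnS. lia.
Qed.

Lemma per_mul (A : Type) (w : nat -> A) p : has_period w p ->
  forall m i, w (i + m * p) = w i.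
Proof. move=> [_ Hp]; elim=> [|m IH] i; first by rewrite mul0n addn0.
by rewrite mulSn (addnC p) addnA Hp IH. Qed.

Theorem theorem13 (A : finType) (mu : A -> seq A) (r : nat) (a : A) (w : nat -> A) :
  2 <= r ->
  uniform mu r ->
  injective (morph_word mu) ->
  prolongable mu a ->
  is_fixed_point_from mu a w ->
  periodic w ->
  forall p : nat,
    has_period w p ->
    (forall q, has_period w q -> p <= q) ->
    uniq (mkseq w p).
Proof.
move=> Hr Hu Hinj _ Hfix _ p Hp Hmin.
have Hp0 : 0 < p by case: Hp.
have HF := @fix_eq _ _ _ _ _ Hr Hu Hfix.
have HPM := @per_mul _ _ _ Hp.
have Hblock i j : (forall k, k < r -> w (r*i+k) = w (r*j+k)) -> w i = w j.
  move=> H.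
  have Hm : mu (w i) = mu (w j).
    apply: (eq_from_nth (x0:=a)); first by rewrite !Hu.
    move=> k; rewrite Hu => Hk; by rewrite -!HF // H.
  have : morph_word mu [:: w i] = morph_word mu [:: w j]
    by rewrite /morph_word /= Hm.
  by move/Hinj => [].
have Hdiv q : (forall i, w (i + q) = w i) -> p %| q.
  move=> Hq.
  have Hm : forall i, w (i + q %% p) = w i.
    move=> i; rewrite -(HPM (q %/ p) (i + q %% p)).
    have -> : i + q %% p + q %/ p * p = i + q by have E := divn_eq q p; lia.
    by rewrite Hq.
  case E: (q %% p) => [|m]; first by apply/eqP; rewrite /dvdn E.
  have : p <= m.+1 by apply: Hmin; split => //; rewrite -E.
  by rewrite -E leqNgt ltn_pmod.
have Hcop : coprime r p.
  set g := gcdn r p.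
  have Hg0 : 0 < g by rewrite gcdn_gt0 Hp0 orbT.
  have Hgr : g %| r by apply: dvdn_gcdl.
  have Hgp : g %| p by apply: dvdn_gcdr.
  have Hq i : w (i + p %/ g) = w i.
    apply: Hblock => k Hk.
    have -> : r * (i + p %/ g) + k = r * i + k + (r %/ g) * p.
      have Erq : r * (p %/ g) = r %/ g * p.
        by rewrite -{1}(divnK Hgr) -{2}(divnK Hgp) -mulnA (mulnC g).
      rewrite mulnDr Erq; lia.
    by rewrite HPM.
  rewrite /coprime; apply/negPn/negP => Hg1.
  have Hg2 : 1 < g by rewrite ltn_neqAle eq_sym Hg1 Hg0.
  have : p <= p %/ g.
    apply: Hmin; split => //; by rewrite divn_gt0 // dvdn_leq.
  by rewrite leqNgt ltn_Pdiv.
have Hit s t : w s = w t -> forall n k, k < r ^ n -> w (r ^ n * s + k) = w (r ^ n * t + k).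
  move=> Hst; elim=> [|n IH] k.
    by rewrite expn0 => /[dup] Hk; rewrite ltnS leqn0 => /eqP ->; rewrite !mul1n !addn0.
  move=> Hk.
  have Hr0 : 0 < r by apply: leq_trans Hr.
  have Hk1 : k %/ r < r ^ n by rewrite ltn_divLR // -expnSr.
  have Hk0 : k %% r < r by rewrite ltn_pmod.
  have E x : r ^ n.+1 * x + k = r * (r ^ n * x + k %/ r) + k %% r.
    by rewrite {1}(divn_eq k r) mulnDr mulnA -expnS addnA (mulnC r (k %/ r)).
  by rewrite !E !HF // IH.
rewrite /mkseq map_inj_in_uniq ?iota_uniq //.
have key s t : s < t -> t < p -> w s = w t -> False.
  move=> Hst Htp Heq.
  set N := r ^ p.
  have HNp : p < N by apply: ltn_expl.
  have Hall k : w (N * s + k) = w (N * t + k).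
    rewrite (divn_eq k p) (addnC (_ * p)) !addnA !HPM; apply: Hit => //.
    by apply: leq_trans (ltn_pmod _ Hp0) (ltnW HNp).
  have Hper i : w (i + N * (t - s)) = w i.
    have HM : N * s * p = N * s + N * s * (p - 1).
      by rewrite -{1}(subnK Hp0) mulnDr muln1 addnC.
    have HT : N * t = N * s + N * (t - s) by rewrite -mulnDr subnKC // ltnW.
    have E1 : w i = w (N*s + (i + N*s*(p-1))).
      by rewrite -(HPM (N*s) i); congr w; rewrite HM; lia.
    have E2 : w (i + N*(t-s)) = w (N*t + (i + N*s*(p-1))).
      by rewrite -(HPM (N*s) (i + N*(t-s))); congr w; rewrite HM HT; lia.
    by rewrite E1 E2 Hall.
  have := Hdiv _ Hper.
  rewrite Gauss_dvdr; last by rewrite /N coprime_sym coprimeXl // coprime_sym.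
  move/(dvdn_leq); rewrite subn_gt0 Hst => /(_ isT). lia.
move=> s t; rewrite !mem_iota !add0n => Hs Ht Heq.
case: (ltngtP s t) => // H.
- by case: (key s t H Ht Heq).
- by case: (key t s H Hs (esym Heq)).
Qed.
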